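(* Let $M$ be a graded $R$-module. The following are equivalent: (1) For all $Q,P\in qp.Spec_g(M)$, if $qp\text{-}V_M^g(Q)=qp\text{-}V_M^g(P)$ then $Q=P$. (2) $|qp.Spec_g^p(M)|\le 1$ for every $p\in Spec_g(R)$. (3) The natural map $\varphi$ is injective.
   Context: $R=\bigoplus_{g\in G}R_g$ is a graded commutative ring with identity graded by a group $G$, $h(R)=\bigcup_g R_g$; $M$ is a graded $R$-module, $h(M)$ its homogeneous elements. $Gr(I)$ is the graded radical of a graded ideal $I$ (elements all of whose homogeneous components have a power in $I$). $Spec_g(R)$: graded prime ideals. $(K:_RM)=\{r: rM\subseteq K\}$. Graded prime submodule: proper graded $P$ with $rm\in P$ ($r\in h(R), m\in h(M)$) implying $m\in P$ or $r\in(P:_RM)$. $Gr_M(K)$: intersection of graded prime submodules containing $K$ ($M$ if none). Graded primeful property of $K$: for each graded prime $p\supseteq(K:_RM)$ there is a graded prime submodule $P\supseteq K$ with $(P:_RM)=p$. Graded quasi-primary submodule: proper graded $Q$ with $rm\in Q$ ($r\in h(R),m\in h(M)$) implying $r\in Gr((Q:_RM))$ or $m\in Gr_M(Q)$. $qp.Spec_g(M)$: graded quasi-primary submodules with the graded primeful property; $qp.Spec_g^p(M)=\{Q\in qp.Spec_g(M): Gr((Q:_RM))=p\}$. $qp\text{-}V_M^g(K)=\{Q\in qp.Spec_g(M): Gr((Q:_RM))\supseteq Gr((K:_RM))\}$. $\overline R=R/\mathrm{Ann}(M)$ and $\overline I=I/\mathrm{Ann}(M)$ for ideals $I\supseteq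 \mathrm{Ann}(M)$. For $Q\in qp.Spec_g(M)$, $(Gr_M(Q):_RM)=Gr((Q:_RM))$ is a graded prime ideal of $R$ containing $\mathrm{Ann}(M)$; the natural map $\varphi:qp.Spec_g(M)\to Spec_g(\overline R)$ is $\varphi(Q)=\overline{(Gr_M(Q):_RM)}$. *)

(* Defs.v *)
From HB Require Import structures.
From mathcomp Require Import all_boot all_order all_algebra.
From Stdlib Require List.
Set Implicit Arguments. Unset Strict Implicit. Unset Printing Implicit Defensive.
Import GRing.Theory.
Local Open Scope ring_scope.

Definition is_group (G : Type) (mul : G -> G -> G) (e : G) (inv : G -> G) : Prop :=
  (forall a b c, mul a (mul b c) = mul (mul a b) c) /\
  (forall a, mul e a = a) /\
  (forall a, mul (inv a) a = e).

(* ---------- graded abelian groups via component maps ----------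
   comp g x is the g-homogeneous component of x; X_g := {x | comp g x = x}.
   The axioms say exactly that X = (+)_g X_g (internal direct sum). *)
Definition is_decomp (G : Type) (V : zmodType) (comp : G -> V -> V) : Prop :=
  (forall g x y, comp g (x + y) = comp g x + comp g y) /\
  (forall g x, comp g (comp g x) = comp g x) /\
  (forall g h x, g <> h -> comp h (comp g x) = 0) /\
  (forall x, exists s : seq G, List.NoDup s /\
       x = \sum_(g <- s) comp g x /\ (forall h, ~ List.In h s -> comp h x = 0)).

Definition graded_ring (G : Type) (mul : G -> G -> G) (R : comPzRingType)
    (cR : G -> R -> R) : Prop :=
  is_decomp cR /\
  (forall g h (x y : R),
      cR (mul g h) (cR g x * cR h y) = cR g x * cR h y).

Definition graded_module (G : Type) (mul : G -> G -> G) (R : comPzRingType)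
    (M : lmodType R) (cR : G -> R -> R) (cM : G -> M -> M) : Prop :=
  is_decomp cM /\
  (forall g h (r : R) (m : M),
      cM (mul g h) (cR g r *: cM h m) = cR g r *: cM h m).

Section GradedDefs.
Variables (G : Type) (R : comPzRingType) (M : lmodType R).
Variables (cR : G -> R -> R) (cM : G -> M -> M).

Definition subset {T : Type} (A B : T -> Prop) : Prop := forall x, A x -> B x.

Definition homR (r : R) : Prop := exists g, cR g r = r.
Definition homM (m : M) : Prop := exists g, cM g m = m.

Definition is_ideal (I : R -> Prop) : Prop :=
  I 0 /\ (forall x y, I x -> I y -> I (x + y)) /\
  (forall r x, I x -> I (r * x)).

Definition graded_ideal (I : R -> Prop) : Prop :=
  is_ideal I /\ (forall x g, I x -> I (cR g x)).

Definition graded_prime_ideal (p : R -> Prop) : Prop :=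
  graded_ideal p /\ ~ p 1 /\
  (forall a b, homR a -> homR b -> p (a * b) -> p a \/ p b).

Definition Gr (I : R -> Prop) : R -> Prop :=
  fun r => forall g, exists n : nat, I (cR g r ^+ n).

Definition is_submodule (N : M -> Prop) : Prop :=
  N 0 /\ (forall x y, N x -> N y -> N (x + y)) /\
  (forall (r : R) x, N x -> N (r *: x)).

Definition graded_submodule (N : M -> Prop) : Prop :=
  is_submodule N /\ (forall x g, N x -> N (cM g x)).

Definition proper (N : M -> Prop) : Prop := exists m, ~ N m.

Definition colon (K : M -> Prop) : R -> Prop :=
  fun r => forall m : M, K (r *: m).

Definition Ann : R -> Prop := fun r => forall m : M, r *: m = 0.

Definition graded_prime_submodule (P : M -> Prop) : Prop :=
  graded_submodule P /\ proper P /\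
  (forall r m, homR r -> homM m -> P (r *: m) -> P m \/ colon P r).

(* Gr_M(K): intersection of graded prime submodules containing K
   (equal to M when there is none) *)
Definition GrM (K : M -> Prop) : M -> Prop :=
  fun m => forall P, graded_prime_submodule P -> subset K P -> P m.

Definition graded_primeful (K : M -> Prop) : Prop :=
  forall p, graded_prime_ideal p -> subset (colon K) p ->
    exists P, graded_prime_submodule P /\ subset K P /\ colon P = p.

Definition graded_quasi_primary (Q : M -> Prop) : Prop :=
  graded_submodule Q /\ proper Q /\
  (forall r m, homR r -> homM m -> Q (r *: m) -> Gr (colon Q) r \/ GrM Q m).

Definition qpSpec (Q : M -> Prop) : Prop :=
  graded_quasi_primary Q /\ graded_primeful Q.

Definition qpSpec_p (p : R -> Prop) (Q : M -> Prop) : Prop :=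
  qpSpec Q /\ Gr (colon Q) = p.

Definition qpV (K : M -> Prop) (Q : M -> Prop) : Prop :=
  qpSpec Q /\ subset (Gr (colon K)) (Gr (colon Q)).

(* the natural map phi(Q) = (Gr_M(Q) :_R M) / Ann(M), where the quotient
   R/Ann(M) is presented by a surjective ring morphism pi with kernel Ann(M) *)
Definition phi (Rbar : comPzRingType) (pi : R -> Rbar) (Q : M -> Prop) : Rbar -> Prop :=
  fun y => exists r, colon (GrM Q) r /\ pi r = y.

End GradedDefs.

(* Main.v *)
Require Import Defs.
From HB Require Import structures.
From mathcomp Require Import all_boot all_order all_algebra.
From mathcomp Require classical_sets.
From Stdlib Require Import Classical FunctionalExtensionality PropExtensionality.
From Stdlib Require List.
Import GRing.Theory.
Local Open Scope ring_scope.

Set Implicit Arguments. Unset Strict Implicit.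

Lemma sum_zero (V : zmodType) (T : Type) (s : seq T) (f : T -> V) :
  (forall k, List.In k s -> f k = 0) -> \sum_(k <- s) f k = 0.
Proof.
elim: s => [|a s IH] h; first by rewrite big_nil.
rewrite big_cons h /=; last by left.
rewrite add0r IH // => k hk; apply: h; by right.
Qed.

Lemma sum_single (V : zmodType) (T : Type) (s : seq T) (f : T -> V) (k0 : T) :
  List.NoDup s -> (forall k, k <> k0 -> f k = 0) -> (~ List.In k0 s -> f k0 = 0) ->
  \sum_(k <- s) f k = f k0.
Proof.
elim: s => [|a s IH] nd hne hin; first by rewrite big_nil hin.
inversion nd as [|a' s' nas nds]; subst.
rewrite big_cons.
case: (classic (a = k0)) => [E|ne].
  subst a; rewrite sum_zero ?addr0 // => k hk; apply: hne => ek; subst k; exact: nas hk.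
rewrite hne // add0r IH // => nin; apply: hin => /= [[]] //; exact: ne.
Qed.

Section Decomp.
Variables (G : Type) (V : zmodType) (comp : G -> V -> V).
Hypothesis H : is_decomp comp.

Lemma compD g x y : comp g (x + y) = comp g x + comp g y.
Proof. by case: H => hh _; apply: hh. Qed.
Lemma compK g x : comp g (comp g x) = comp g x.
Proof. by case: H => _ [hh _]; apply: hh. Qed.
Lemma compO g h x : g <> h -> comp h (comp g x) = 0.
Proof. by case: H => _ [_ [hh _]]; apply: hh. Qed.
Lemma comp_dec x : exists s : seq G, List.NoDup s /\
       x = \sum_(g <- s) comp g x /\ (forall h, ~ List.In h s -> comp h x = 0).
Proof. by case: H => _ [_ [_ hh]]; apply: hh. Qed.
Lemma comp0 g : comp g 0 = 0.
Proof.
have h := compD g 0 0; rewrite addr0 in h.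
apply: (addrI (comp g 0)); by rewrite addr0 -h.
Qed.
Lemma comp_sum g (T : Type) (s : seq T) (f : T -> V) :
  comp g (\sum_(k <- s) f k) = \sum_(k <- s) comp g (f k).
Proof. exact: (big_morph (comp g) (compD g) (comp0 g)). Qed.
Lemma comp_hom g h x : comp g x = x -> comp h x = x \/ comp h x = 0.
Proof.
move=> hx; case: (classic (g = h)) => [<-|ne]; first by left.
by right; rewrite -hx compO.
Qed.
End Decomp.

Section Group.
Variables (G : Type) (mul : G -> G -> G) (e : G) (inv : G -> G).
Hypothesis Hg : is_group mul e inv.
Lemma gassoc a b c : mul a (mul b c) = mul (mul a b) c. Proof. by case: Hg => hh _; apply: hh. Qed.
Lemma glid a : mul e a = a. Proof. by case: Hg => _ [hh _]; apply: hh. Qed.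
Lemma glinv a : mul (inv a) a = e. Proof. by case: Hg => _ [_ hh]; apply: hh. Qed.
Lemma grinv a : mul a (inv a) = e.
Proof.
have h1 : mul a (inv a) = mul (mul (inv (inv a)) (inv a)) (mul a (inv a)).
  by rewrite glinv glid.
by rewrite h1 -gassoc (gassoc (inv a) a (inv a)) glinv glid glinv.
Qed.
Lemma grid a : mul a e = a.
Proof. by rewrite -(glinv a) gassoc grinv glid. Qed.
Lemma gmulK g h : mul (mul g h) (inv h) = g.
Proof. by rewrite -gassoc grinv grid. Qed.
Lemma gmulVK g h : mul (mul g (inv h)) h = g.
Proof. by rewrite -gassoc glinv grid. Qed.
Lemma gcancel k g h : mul k h = mul g h -> k = g.
Proof. move=> E; by rewrite -(gmulK k h) E gmulK. Qed.
End Group.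

Section Graded.
Variables (G : Type) (mul : G -> G -> G) (e : G) (inv : G -> G).
Variables (R : comPzRingType) (M : lmodType R) (cR : G -> R -> R) (cM : G -> M -> M).
Hypothesis Hg : is_group mul e inv.
Hypothesis HR : graded_ring mul cR.
Hypothesis HM : graded_module mul cR cM.

Let HRd : is_decomp cR := proj1 HR.
Let HMd : is_decomp cM := proj1 HM.
Let HRm : forall g h (x y : R), cR (mul g h) (cR g x * cR h y) = cR g x * cR h y := proj2 HR.
Let HMm : forall g h (r : R) (m : M), cM (mul g h) (cR g r *: cM h m) = cR g r *: cM h m
  := proj2 HM.

Lemma compR_mul h a r g : cR h a = a -> cR g (r * a) = cR (mul g (inv h)) r * a.
Proof.
move=> ha; have [s [nd [hr hz]]] := comp_dec HRd r.
rewrite {1}hr big_distrl /= (comp_sum HRd).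
rewrite (@sum_single _ _ s (fun k => cR g (cR k r * a)) (mul g (inv h))) //.
- have hy := HRm (mul g (inv h)) h r a; by rewrite ha (gmulVK Hg) in hy.
- move=> k ne; rewrite -ha -(HRm k h r a); apply: (compO HRd) => E; apply: ne.
  apply: (gcancel Hg (h := h)); by rewrite E (gmulVK Hg).
- by move=> nin; rewrite hz // mul0r (comp0 HRd).
Qed.

Lemma compM_smul h (m : M) r g : cM h m = m -> cM g (r *: m) = cR (mul g (inv h)) r *: m.
Proof.
move=> ha; have [s [nd [hr hz]]] := comp_dec HRd r.
rewrite {1}hr scaler_suml /= (comp_sum HMd).
rewrite (@sum_single _ _ s (fun k => cM g (cR k r *: m)) (mul g (inv h))) //.
- have hy := HMm (mul g (inv h)) h r m; by rewrite ha (gmulVK Hg) in hy.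
- move=> k ne; rewrite -ha -(HMm k h r m); apply: (compO HMd) => E; apply: ne.
  apply: (gcancel Hg (h := h)); by rewrite E (gmulVK Hg).
- by move=> nin; rewrite hz // scale0r (comp0 HMd).
Qed.

Lemma sub_sum (N : M -> Prop) (T : Type) (s : seq T) (f : T -> M) :
  is_submodule N -> (forall k, N (f k)) -> N (\sum_(k <- s) f k).
Proof. move=> [N0 [ND _]] hf; apply: (big_ind N) => //. Qed.

Lemma ideal_sum (I : R -> Prop) (T : Type) (s : seq T) (f : T -> R) :
  is_ideal I -> (forall k, I (f k)) -> I (\sum_(k <- s) f k).
Proof. move=> [N0 [ND _]] hf; apply: (big_ind I) => //. Qed.

Lemma colon_ideal (N : M -> Prop) : is_submodule N -> is_ideal (colon N).
Proof.
move=> [N0 [ND NZ]]; split; [|split].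
- by move=> m; rewrite scale0r.
- by move=> x y hx hy m; rewrite scalerDl; apply: ND.
- by move=> r x hx m; rewrite -scalerA; apply: NZ.
Qed.

Lemma colon_graded (N : M -> Prop) : graded_submodule cM N ->
  forall x g, colon N x -> colon N (cR g x).
Proof.
move=> [hN Ng] x g hx m.
have [s [nd [hm hz]]] := comp_dec HMd m.
rewrite {1}hm scaler_sumr; apply: sub_sum => // h.
rewrite -[X in cR X x](gmulK Hg g h) -(@compM_smul h (cM h m) x (mul g h)) ?(compK HMd) //.
exact: Ng.
Qed.

Lemma colon_gideal (N : M -> Prop) : graded_submodule cM N -> graded_ideal cR (colon N).
Proof. move=> hN; split; [apply: colon_ideal; exact: hN.1 | exact: colon_graded]. Qed.

Lemma prime_gsub P : graded_prime_submodule cR cM P -> graded_submodule cM P.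
Proof. by case. Qed.

Lemma GrM_gsub K : graded_submodule cM (GrM cR cM K).
Proof.
split; [split; [|split]|].
- move=> P hP _; by case: (prime_gsub hP) => [[]].
- move=> x y hx hy P hP hK; case: (prime_gsub hP) => [[_ [hD _]] _].
  by apply: hD; [apply: hx | apply: hy].
- move=> r x hx P hP hK; case: (prime_gsub hP) => [[_ [_ hZ]] _].
  by apply: hZ; apply: hx.
- move=> x g hx P hP hK; case: (prime_gsub hP) => [_ hG].
  by apply: hG; apply: hx.
Qed.

Lemma hom_pow g (y : R) n : cR g y = y -> homR cR (y ^+ n.+1).
Proof.
move=> hy; elim: n => [|n [h hh]]; first by exists g; rewrite expr1.
exists (mul g h); by rewrite exprS -{1}hy -hh HRm hy.
Qed.

Lemma colon_prime P : graded_prime_submodule cR cM P -> graded_prime_ideal cR (colon P).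
Proof.
move=> hP; have hgs := prime_gsub hP.
case: hP => _ [[m0 hm0] hpr].
split; first exact: colon_gideal.
split.
  by move=> h1; apply: hm0; have := h1 m0; rewrite scale1r.
move=> a b [g ha] [h hb] hab.
case: (classic (colon P a)) => [|na]; [by left | right].
move=> m; have [s [nd [hm hz]]] := comp_dec HMd m.
rewrite {1}hm scaler_sumr; apply: sub_sum; first exact: hgs.1.
move=> k.
have hom : homM cM (b *: cM k m) by exists (mul h k); rewrite -hb HMm.
have := hpr a (b *: cM k m) (ex_intro _ g ha) hom.
rewrite scalerA; case=> [||//]; first exact: hab.
by [].
Qed.


Lemma prime_pow p y g n : graded_prime_ideal cR p -> cR g y = y -> p (y ^+ n) -> p y.
Proof.
move=> [_ [n1 pr]] hy; case: n => [|n]; first by rewrite expr0 => h; exfalso; exact: n1 h.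
elim: n => [|n IH]; first by rewrite expr1.
rewrite exprS => h.
case: (pr _ _ (ex_intro _ g hy) (hom_pow n hy) h) => //.
Qed.

Lemma prime_Gr p I : graded_prime_ideal cR p -> Defs.subset I p -> Defs.subset (Gr cR I) p.
Proof.
move=> pp Ip r hr; have [s [nd [hs hz]]] := comp_dec HRd r.
rewrite hs; apply: ideal_sum; first exact: pp.1.1.
move=> g; have [n hn] := hr g.
apply: (prime_pow (g := g) (n := n)) => //; first exact: (compK HRd).
exact: Ip.
Qed.

Lemma hom_Gr I y g n : is_ideal I -> cR g y = y -> I (y ^+ n) -> Gr cR I y.
Proof.
move=> [I0 _] hy hn h; case: (comp_hom HRd h hy) => ->; first by exists n.
by exists 1%N; rewrite expr1.
Qed.

Lemma Gr_hom I y g : cR g y = y -> Gr cR I y -> exists n, I (y ^+ n).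
Proof. by move=> hy h; have [n hn] := h g; rewrite hy in hn; exists n. Qed.

Lemma krull I x : graded_ideal cR I -> (forall n, ~ I (x ^+ n)) ->
  exists p, graded_prime_ideal cR p /\ Defs.subset I p /\ ~ p x.
Proof.
move=> hI hx.
pose good (J : R -> Prop) := graded_ideal cR J /\ Defs.subset I J /\ (forall n, ~ J (x ^+ n)).
pose PP (J : R -> Prop) := J = (fun _ => False) \/ good J.
have goodI : good I by split; [|split].
have hz : forall J y, PP J -> J y -> good J by move=> J y [->|//].
have [A [PA maxA]] : exists A, PP A /\ forall B, classical_sets.proper A B -> ~ PP B.
  apply: classical_sets.Zorn_bigcup => F FP Ftot.
  case: (classic (exists J, F J /\ good J)) => [[J0 [FJ0 gJ0]]|nog]; last first.
    left; apply: functional_extensionality => y; apply: propositional_extensionality.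
    split => //; case=> X FX Xy; apply: nog; exists X; split => //; exact: hz (FP _ FX) Xy.
  have hg : forall X y, F X -> X y -> good X by move=> X y FX Xy; exact: hz (FP _ FX) Xy.
  right; split; [split; [split; [|split]|]|split].
  - by exists J0 => //; exact: gJ0.1.1.1.
  - move=> a b [X1 F1 a1] [X2 F2 b2].
    case: (Ftot X1 X2 F1 F2) => sub.
      exists X2 => //; apply: (hg X2 b F2 b2).1.1.2.1 => //; exact: sub.
    exists X1 => //; apply: (hg X1 a F1 a1).1.1.2.1 => //; exact: sub.
  - move=> r a [X F1 a1]; exists X => //; exact: (hg X a F1 a1).1.1.2.2.
  - move=> a g [X F1 a1]; exists X => //; exact: (hg X a F1 a1).1.2.
  - move=> y Iy; exists J0 => //; exact: gJ0.2.1.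
  - move=> n [X F1 hX]; exact: (hg X _ F1 hX).2.2 n hX.
have gA : good A.
  case: PA => [A0|//]; exfalso; apply: (maxA I); last by right.
  split; first by rewrite A0 => ? .
  move=> sub; have := sub 0 hI.1.1; by rewrite A0.
exists A; split; last split; [|exact: gA.2.1|].
- split; first exact: gA.1.
  split; first by move=> A1; apply: (gA.2.2 0%N); rewrite expr0.
  have ext : forall c k, cR k c = c -> ~ A c -> exists n j r, A j /\ x ^+ n = j + r * c.
    move=> c k hc nc.
    pose B y := exists j r, A j /\ y = j + r * c.
    have nPB : ~ PP B.
      apply: maxA; split.
        by move=> y Ay; exists y, 0; rewrite mul0r addr0.
      move=> sub; apply: nc; apply: sub; exists 0, 1; split; first exact: gA.1.1.1.
      by rewrite add0r mul1r.
    apply: NNPP => nex; apply: nPB; right; split; [split; [split; [|split]|]|split].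
    + by exists 0, 0; split; [exact: gA.1.1.1 | rewrite mul0r addr0].
    + move=> _ _ [j1 [r1 [A1 ->]]] [j2 [r2 [A2 ->]]]; exists (j1 + j2), (r1 + r2).
      split; first exact: gA.1.1.2.1.
      by rewrite mulrDl addrACA.
    + move=> t _ [j [r [Aj ->]]]; exists (t * j), (t * r); split; first exact: gA.1.1.2.2.
      by rewrite mulrDr mulrA.
    + move=> _ g [j [r [Aj ->]]]; exists (cR g j), (cR (mul g (inv k)) r).
      split; first exact: gA.1.2.
      by rewrite (compD HRd) (compR_mul _ _ hc).
    + by move=> y Iy; exists y, 0; split; [exact: gA.2.1 | rewrite mul0r addr0].
    + move=> n [j [r [Aj E]]]; apply: nex; by exists n, j, r.
  move=> a b [g ha] [h hb] hab.
  case: (classic (A a)) => [|na]; first by left.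
  case: (classic (A b)) => [|nb]; first by right.
  exfalso.
  have [n [j1 [r1 [A1 E1]]]] := ext a g ha na.
  have [m [j2 [r2 [A2 E2]]]] := ext b h hb nb.
  apply: (gA.2.2 (n + m)%N); rewrite exprD E1 E2 mulrDl.
  have AD : forall u v, A u -> A v -> A (u + v) := gA.1.1.2.1.
  have AM : forall u v, A v -> A (u * v) := gA.1.1.2.2.
  apply: (AD); first by rewrite mulrC; apply: (AM).
  rewrite mulrDr; apply: (AD); first exact: (AM).
  by rewrite mulrACA; apply: (AM).
- by move=> Ax; apply: (gA.2.2 1%N); rewrite expr1.
Qed.

Section QP.
Variable Q : M -> Prop.
Hypothesis hQ : qpSpec cR cM Q.

Let hQg : graded_submodule cM Q := hQ.1.1.
Let hIg : graded_ideal cR (colon Q) := colon_gideal hQg.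

Lemma qp_n1 : ~ colon Q 1.
Proof.
case: hQ.1.2.1 => m0 hm0 h1; apply: hm0; have := h1 m0; by rewrite scale1r.
Qed.

Lemma qpM1 : Defs.subset (Gr cR (colon Q)) (colon (GrM cR cM Q)).
Proof.
move=> r hr m P hP hQP.
have := prime_Gr (colon_prime hP) (I := colon Q) _ hr; apply.
by move=> y hy m'; apply: hQP; apply: hy.
Qed.

Lemma qpM2 : Defs.subset (colon (GrM cR cM Q)) (Gr cR (colon Q)).
Proof.
move=> r hr g; apply: NNPP => nex.
have hx : forall n, ~ colon Q ((cR g r) ^+ n) by move=> n hn; apply: nex; exists n.
have [p [pp [Ip npx]]] := krull hIg hx.
have [P [hP [QP cP]]] := hQ.2 p pp Ip.
apply: npx; rewrite -cP; apply: (colon_graded (prime_gsub hP)).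
by move=> m; apply: hr.
Qed.

Lemma qpEq : Gr cR (colon Q) = colon (GrM cR cM Q).
Proof.
apply: functional_extensionality => y; apply: propositional_extensionality.
split; [exact: qpM1 | exact: qpM2].
Qed.

Lemma qpPr : graded_prime_ideal cR (Gr cR (colon Q)).
Proof.
have prime : forall a b, homR cR a -> homR cR b -> Gr cR (colon Q) (a * b) ->
    Gr cR (colon Q) a \/ Gr cR (colon Q) b.
  move=> a b [g ha] [h hb] hab.
  case: (classic (Gr cR (colon Q) b)) => [|nb]; [by right | left].
  have hab' : cR (mul g h) (a * b) = a * b by rewrite -ha -hb HRm.
  have [n hn] := Gr_hom hab' hab.
  case: n hn => [|n] hn; first by rewrite expr0 in hn; exfalso; exact: qp_n1 hn.
  rewrite exprMn in hn.
  have nbn : ~ colon (GrM cR cM Q) (b ^+ n.+1).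
    move=> hbn; apply: nb; have := qpM2 hbn.
    have [h' hh'] := hom_pow n hb.
    move=> /(Gr_hom hh') [k hk]; rewrite -exprM in hk; exact: hom_Gr hIg.1 hb hk.
  have [m0 nm] : exists m, ~ GrM cR cM Q (b ^+ n.+1 *: m).
    apply: NNPP => h'; apply: nbn => m; apply: NNPP => h''; apply: h'; by exists m.
  have [k nk] : exists k, ~ GrM cR cM Q (b ^+ n.+1 *: cM k m0).
    apply: NNPP => h'; apply: nm.
    have [s [nd [hm _]]] := comp_dec HMd m0.
    rewrite {1}hm scaler_sumr; apply: (@sub_sum (GrM cR cM Q)); first exact: (GrM_gsub Q).1.
    move=> k; apply: NNPP => h''; apply: h'; by exists k.
  have [ga hga] := hom_pow n ha.
  have homm : homM cM (b ^+ n.+1 *: cM k m0).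
    have [h' hh'] := hom_pow n hb; exists (mul h' k); by rewrite -hh' HMm.
  have hQ3 := hQ.1.2.2.
  case: (hQ3 (a ^+ n.+1) (b ^+ n.+1 *: cM k m0) (ex_intro _ ga hga) homm _).
  - by rewrite scalerA; apply: hn.
  - move=> haN; have [k' hk'] := Gr_hom hga haN; rewrite -exprM in hk'.
    exact: hom_Gr hIg.1 ha hk'.
  - by move=> /nk.
split; [|split]; last exact: prime.
- rewrite qpEq; exact: colon_gideal (GrM_gsub Q).
- rewrite qpEq => h1.
  have hx : forall n, ~ colon Q (1 ^+ n) by move=> n; rewrite expr1n; exact: qp_n1.
  have [p [pp [Ip _]]] := krull hIg hx.
  have [P [hP [QP cP]]] := hQ.2 p pp Ip.
  case: hP.2.1 => m0 hm0; apply: hm0; have := h1 m0 P hP QP; by rewrite scale1r.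
Qed.

End QP.
End Graded.

Unset Implicit Arguments.

Theorem theorem3p7 (G : Type) (mul : G -> G -> G) (e : G) (inv : G -> G)
    (R : comPzRingType) (M : lmodType R) (cR : G -> R -> R) (cM : G -> M -> M)
    (Rbar : comPzRingType) (pi : {rmorphism R -> Rbar}) :
  is_group mul e inv ->
  graded_ring mul cR ->
  graded_module mul cR cM ->
  (forall y : Rbar, exists r : R, pi r = y) ->
  (forall r : R, pi r = 0 <-> Ann M r) ->
  let s1 := forall Q P : M -> Prop, qpSpec cR cM Q -> qpSpec cR cM P ->
              qpV cR cM Q = qpV cR cM P -> Q = P in
  let s2 := forall p : R -> Prop, graded_prime_ideal cR p ->
              forall Q P : M -> Prop, qpSpec_p cR cM p Q -> qpSpec_p cR cM p P -> Q = P in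
  let s3 := forall Q P : M -> Prop, qpSpec cR cM Q -> qpSpec cR cM P ->
              phi cR cM pi Q = phi cR cM pi P -> Q = P in
  (s1 <-> s2) /\ (s2 <-> s3).
Proof.
move=> Hg HR HM _ Hker s1 s2 s3; rewrite /s1 /s2 /s3 {s1 s2 s3}.
have EQ : forall Q, qpSpec cR cM Q -> Gr cR (colon Q) = colon (GrM cR cM Q).
  by move=> Q hQ; exact: (qpEq Hg HR HM hQ).
have PR : forall Q, qpSpec cR cM Q -> graded_prime_ideal cR (Gr cR (colon Q)).
  by move=> Q hQ; exact: (qpPr Hg HR HM hQ).
have V : forall Q P, qpSpec cR cM Q -> qpSpec cR cM P ->
    (qpV cR cM Q = qpV cR cM P <-> Gr cR (colon Q) = Gr cR (colon P)).
  move=> Q P hQ hP; split => [E|E]; last by rewrite /qpV E.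
  have h1 : qpV cR cM Q P by rewrite E; split.
  have h2 : qpV cR cM P Q by rewrite -E; split.
  apply: functional_extensionality => y; apply: propositional_extensionality.
  split; [exact: h1.2 | exact: h2.2].
have sub1 : forall Q P, phi cR cM pi Q = phi cR cM pi P ->
    Defs.subset (colon (GrM cR cM Q)) (colon (GrM cR cM P)).
  move=> Q P E r hr.
  have : phi cR cM pi P (pi r) by rewrite -E; exists r.
  case=> s [hs es].
  have ann : Ann M (r - s) by apply/Hker; rewrite rmorphB es subrr.
  have -> : r = s + (r - s) by rewrite addrC subrK.
  have hid := colon_ideal (GrM_gsub cR cM P).1.
  apply: hid.2.1 => // m; rewrite ann; exact: (GrM_gsub cR cM P).1.1.
have Phi : forall Q P, phi cR cM pi Q = phi cR cM pi P <->
    colon (GrM cR cM Q) = colon (GrM cR cM P).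
  move=> Q P; split => [E|E]; last by rewrite /phi E.
  apply: functional_extensionality => y; apply: propositional_extensionality.
  split; [exact: sub1 | apply: sub1; by rewrite E].
split; split.
- move=> h1 p pp Q P [hQ eQ] [hP eP]; apply: h1 => //; apply/V => //; by rewrite eQ eP.
- move=> h2 Q P hQ hP hV; have E := (V Q P hQ hP).1 hV.
  by apply: (h2 _ (PR Q hQ)) => //; split.
- move=> h2 Q P hQ hP hphi; have E := (Phi Q P).1 hphi.
  rewrite -EQ // -EQ // in E.
  by apply: (h2 _ (PR Q hQ)) => //; split.
- move=> h3 p pp Q P [hQ eQ] [hP eP]; apply: h3 => //; apply/Phi.
  by rewrite -EQ // -EQ // eQ eP.
Qed.
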